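(* Let $f(x_1,x_2)=(-2+x_1+x_2)^2$ and $g(x_1,x_2)=1-x_1^2-x_2^2$; the global minimum of $f$ on $\{x: g(x)\geqslant 0\}$ is $2(3-2\sqrt{2})>0$. For every $r\in\mathbb{N}$ and every $\lambda\geqslant 0$, there do not exist SDSOS polynomials $\sigma_0,\sigma_1$ such that $$(x_1^2+x_2^2)^r\,(f(x_1,x_2)-\lambda)=\sigma_0(x_1,x_2)+\sigma_1(x_1,x_2)\,g(x_1,x_2).$$ Hence the optimal value of the r-SDSOS (and therefore of the r-DSOS) relaxation, $\sup\{\lambda: (x_1^2+x_2^2)^r(f-\lambda)=\sigma_0+\sigma_1 g,\ \sigma_0,\sigma_1 \text{ SDSOS (resp. DSOS)}\}$, is at most $0$ for every $r$, so these hierarchies do not converge to the global minimum.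
   Context: For $\alpha\in\mathbb{N}^2$ write $x^\alpha=x_1^{\alpha_1}x_2^{\alpha_2}$. A polynomial is SDSOS if it is of the form $\sum_k (p_k x^{\alpha(k)}+q_k x^{\beta(k)})^2$ (finite sum) with $p_k,q_k\in\mathbb{R}$ and $\alpha(k),\beta(k)\in\mathbb{N}^2$. A polynomial is DSOS if it is a finite nonnegative combination of polynomials of the forms $(x^\alpha)^2$, $(x^\alpha+x^\beta)^2$, $(x^\alpha-x^\beta)^2$; every DSOS polynomial is SDSOS. *)

(* Defs.v *)
From HB Require Import structures.
From mathcomp Require Import all_boot all_order all_algebra.
From mathcomp Require Import mpoly.
Set Implicit Arguments. Unset Strict Implicit. Unset Printing Implicit Defensive.
Import Order.TTheory GRing.Theory Num.Theory.
Local Open Scope ring_scope.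

(* Polynomials in x_1, x_2 : {mpoly R[2]}; variables 'X_0 (= x_1), 'X_1 (= x_2);
   the monomial x^alpha for alpha in N^2 is 'X_[alpha] with alpha : 'X_{1..2}. *)

Definition SDSOS (R : rcfType) (s : {mpoly R[2]}) : Prop :=
  exists l : seq (R * R * 'X_{1..2} * 'X_{1..2}),
    s = \sum_(t <- l) (t.1.1.1 *: 'X_[t.1.2] + t.1.1.2 *: 'X_[t.2]) ^+ 2.

Definition dsos_gen (R : rcfType) (a b : 'X_{1..2}) (k : option bool)
  : {mpoly R[2]} :=
  match k with
  | None => 'X_[a] ^+ 2
  | Some true => ('X_[a] + 'X_[b]) ^+ 2
  | Some false => ('X_[a] - 'X_[b]) ^+ 2
  end.

Definition DSOS (R : rcfType) (s : {mpoly R[2]}) : Prop :=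
  exists l : seq (R * 'X_{1..2} * 'X_{1..2} * option bool),
    (forall t, t \in l -> 0 <= t.1.1.1) /\
    s = \sum_(t <- l) t.1.1.1 *: dsos_gen R t.1.1.2 t.1.2 t.2.

Definition f_ex (R : rcfType) : {mpoly R[2]} :=
  ((-2) %:MP + 'X_0 + 'X_1) ^+ 2.
Definition g_ex (R : rcfType) : {mpoly R[2]} :=
  1 - 'X_0 ^+ 2 - 'X_1 ^+ 2.
Definition sqnorm2 (R : rcfType) : {mpoly R[2]} :=
  'X_0 ^+ 2 + 'X_1 ^+ 2.

(* Main.v *)
Require Import Defs.
From HB Require Import structures.
From mathcomp Require Import all_boot all_order all_algebra.
From mathcomp Require Import mpoly.
From mathcomp Require Import ring lra.
Import Order.TTheory GRing.Theory Num.Theory.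
Local Open Scope ring_scope.

Section S.
Variable R : rcfType.

Definition pt (s1 s2 : R) : 'I_2 -> R := fun i => if (i : nat) == 0%N then s1 else s2.

Lemma mevalXpow (v : 'I_2 -> R) (p : {mpoly R[2]}) k : (p ^+ k).@[v] = p.@[v] ^+ k.
Proof. exact: rmorphXn. Qed.

Lemma evX0 s1 s2 : ('X_0 : {mpoly R[2]}).@[pt s1 s2] = s1.
Proof. by rewrite mevalXU. Qed.
Lemma evX1 s1 s2 : ('X_1 : {mpoly R[2]}).@[pt s1 s2] = s2.
Proof. by rewrite mevalXU. Qed.

Lemma evf (v : 'I_2 -> R) : (f_ex R).@[v] = (-2 + v 0 + v 1) ^+ 2.
Proof. by rewrite /f_ex mevalXpow !mevalD mevalC !mevalXU. Qed.
Lemma evg (v : 'I_2 -> R) : (g_ex R).@[v] = 1 - v 0 ^+ 2 - v 1 ^+ 2.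
Proof. by rewrite /g_ex !mevalB meval1 !mevalXpow !mevalXU. Qed.
Lemma evn (v : 'I_2 -> R) : (sqnorm2 R).@[v] = v 0 ^+ 2 + v 1 ^+ 2.
Proof. by rewrite /sqnorm2 !mevalD !mevalXpow !mevalXU. Qed.

Lemma evmono (m : 'X_{1..2}) s1 s2 :
  ('X_[m] : {mpoly R[2]}).@[pt s1 s2] = s1 ^+ (m ord0) * s2 ^+ (m (@Ordinal 2 1 isT)).
Proof. rewrite mevalX big_ord_recr /= big_ord_recr big_ord0 /= mul1r.
have -> : widen_ord (leqnSn 1) ord_max = ord0 :> 'I_2 by apply/val_inj.
have -> : ord_max = Ordinal (isT : 1 < 2)%N :> 'I_2 by apply/val_inj.
by [].
Qed.

Lemma alg (p q x0 x1 y0 y1 e1 e2 f1 f2 : R) :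
  (e1 = 1 \/ e1 = -1) -> (e2 = 1 \/ e2 = -1) -> (f1 = 1 \/ f1 = -1) -> (f2 = 1 \/ f2 = -1) ->
 0 <= (p*(x0*x1) + q*(y0*y1))^+2 + (p*((e1*x0)*x1) + q*((f1*y0)*y1))^+2 + (p*(x0*(e2*x1)) + q*(y0*(f2*y1)))^+2 - (p*((e1*x0)*(e2*x1)) + q*((f1*y0)*(f2*y1)))^+2.
Proof.
move=> H1 H2 H3 H4.
have h1 := sqr_ge0 (p*x0*x1 + q*y0*y1).
have h2 := sqr_ge0 (p*x0*x1 - q*y0*y1).
by case: H1 => ->; case: H2 => ->; case: H3 => ->; case: H4 => ->; nra.
Qed.

Lemma sgn k : (-1) ^+ k = 1 :> R \/ (-1) ^+ k = -1 :> R.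
Proof. rewrite -signr_odd; case: odd => /=; [right; rewrite expr1|left; rewrite expr0]; by []. Qed.

Definition aa : R := 3 / 5.
Definition L (p : {mpoly R[2]}) : R :=
  p.@[pt aa aa] + p.@[pt (- aa) aa] + p.@[pt aa (- aa)] - p.@[pt (- aa) (- aa)].

Lemma LD p q : L (p + q) = L p + L q.
Proof. rewrite /L !mevalD; ring. Qed.
Lemma L0 : L 0 = 0.
Proof. rewrite /L !meval0; ring. Qed.
Lemma LZ c p : L (c *: p) = c * L p.
Proof. rewrite /L !mevalZ; ring. Qed.
Lemma LMg p : L (p * g_ex R) = (1 - 2 * aa ^+ 2) * L p.
Proof. rewrite /L !mevalM !evg /pt /= !sqrrN; ring. Qed.

Lemma Lterm p q (al be : 'X_{1..2}) : 0 <= L ((p *: 'X_[al] + q *: 'X_[be]) ^+ 2).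
Proof.
rewrite /L !mevalXpow !mevalD !mevalZ !evmono !(exprNn aa).
by apply: alg; apply: sgn.
Qed.

Lemma L_sdsos s : SDSOS s -> 0 <= L s.
Proof.
move=> [l ->]; elim: l => [|t l IH]; first by rewrite big_nil L0.
by rewrite big_cons LD addr_ge0 // Lterm.
Qed.

Lemma L_dsos s : DSOS s -> 0 <= L s.
Proof.
move=> [l [Hl ->]]; elim: l Hl => [|t l IH] Hl; first by rewrite big_nil L0.
rewrite big_cons LD addr_ge0 //; last first.
  by apply: IH => u hu; apply: Hl; rewrite in_cons hu orbT.
rewrite LZ mulr_ge0 //; first by apply: Hl; rewrite in_cons eqxx.
case: t.2 => [[]|] /=.
- by have := Lterm 1 1 t.1.1.2 t.1.2; rewrite !scale1r.
- by have := Lterm 1 (-1) t.1.1.2 t.1.2; rewrite scale1r scaleN1r.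
- by have := Lterm 1 0 t.1.1.2 t.1.1.2; rewrite scale1r scale0r addr0.
Qed.

Lemma Lmain r lam : L (sqnorm2 R ^+ r * (f_ex R - lam%:MP)) = (aa ^+ 2 + aa ^+ 2) ^+ r * (8 - 16 * aa - 2 * lam).
Proof.
rewrite /L !mevalM !mevalXpow !evn !mevalB !evf !mevalC /pt /= !sqrrN; ring.
Qed.

Lemma key r lam s0 s1 : 0 <= lam -> 0 <= L s0 -> 0 <= L s1 ->
  sqnorm2 R ^+ r * (f_ex R - lam%:MP) <> s0 + s1 * g_ex R.
Proof.
move=> hl h0 h1 E.
have := congr1 L E; rewrite Lmain LD LMg => E2.
have ha : aa = 3 / 5 by [].
have hp : 0 < (aa ^+ 2 + aa ^+ 2) ^+ r.
  by apply: exprn_gt0; rewrite ha; lra.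
have hneg : 8 - 16 * aa - 2 * lam < 0 by rewrite ha; lra.
have hg : 0 <= 1 - 2 * aa ^+ 2 by rewrite ha; lra.
have hlt : (aa ^+ 2 + aa ^+ 2) ^+ r * (8 - 16 * aa - 2 * lam) < 0 by rewrite pmulr_rlt0.
have hm : 0 <= (1 - 2 * aa ^+ 2) * L s1 by apply: mulr_ge0.
rewrite E2 in hlt. lra.
Qed.
End S.
Theorem mainTheorem4 (R : rcfType) :
  (* the global minimum of f on {g >= 0} is 2(3 - 2 sqrt 2) > 0 *)
  [/\ 0 < 2 * (3 - 2 * Num.sqrt (2 : R)),
      (forall x : 'I_2 -> R, 0 <= (g_ex R).@[x] ->
          2 * (3 - 2 * Num.sqrt 2) <= (f_ex R).@[x]),
      (exists x : 'I_2 -> R, 0 <= (g_ex R).@[x] /\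
          (f_ex R).@[x] = 2 * (3 - 2 * Num.sqrt 2)),
  (* no r-SDSOS certificate for any r and lambda >= 0 *)
      (forall (r : nat) (lambda : R), 0 <= lambda ->
          ~ exists s0 s1 : {mpoly R[2]},
              [/\ SDSOS s0, SDSOS s1 &
                  sqnorm2 R ^+ r * (f_ex R - lambda%:MP) = s0 + s1 * g_ex R])
  & (* hence the r-SDSOS and r-DSOS values are <= 0 *)
      (forall (r : nat) (lambda : R),
          (exists s0 s1 : {mpoly R[2]},
              [/\ SDSOS s0, SDSOS s1 &
                  sqnorm2 R ^+ r * (f_ex R - lambda%:MP) = s0 + s1 * g_ex R])
          \/
          (exists s0 s1 : {mpoly R[2]},
              [/\ DSOS s0, DSOS s1 &
                  sqnorm2 R ^+ r * (f_ex R - lambda%:MP) = s0 + s1 * g_ex R])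
          -> lambda <= 0)].

Proof.
set s := Num.sqrt (2 : R).
have s2 : s ^+ 2 = 2 by rewrite sqr_sqrtr // ler0n.
have s0 : 0 <= s by apply: sqrtr_ge0.
split.
- nra.
- move=> x; rewrite evg evf => hg.
  have hq : (x 0 + x 1) ^+ 2 <= s ^+ 2.
    by rewrite s2; have := sqr_ge0 (x 0 - x 1); nra.
  have h1 : x 0 + x 1 <= s.
    rewrite leNgt; apply/negP => h.
    have : s ^+ 2 < (x 0 + x 1) ^+ 2 by rewrite ltr_pXn2r // ?nnegrE //; lra.
    lra.
  have hs : s < 3 / 2 by rewrite ltNge; apply/negP => h; nra.
  have -> : 2 * (3 - 2 * s) = (2 - s) ^+ 2 by rewrite sqrrB s2; ring.
  have e : (-2 + x 0 + x 1) ^+ 2 = ((2 - s) + (s - x 0 - x 1)) ^+ 2 by ring.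
  rewrite e sqrrD; have := sqr_ge0 (s - x 0 - x 1); nra.
- exists (@pt R (s / 2) (s / 2)); rewrite evg evf /pt /=; split; nra.
- move=> r lam hl [s0' [s1' [H0 H1 E]]].
  by apply: (@key R r lam s0' s1' hl _ _ E); apply: L_sdsos.
- move=> r lam H; rewrite leNgt; apply/negP => hl.
  case: H => [[s0' [s1' [H0 H1 E]]]|[s0' [s1' [H0 H1 E]]]].
  + by apply: (@key R r lam s0' s1' (ltW hl) _ _ E); apply: L_sdsos.
  + by apply: (@key R r lam s0' s1' (ltW hl) _ _ E); apply: L_dsos.
Qed.
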